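(* Let $\mathcal{X}$ be any set and $\mathcal{H}\subseteq\{0,1\}^{\mathcal{X}}$. (i) If $\mathcal{H}$ does not have an infinite Littlestone tree, then there is a strategy for the learner in the online learning game that makes only finitely many mistakes against any adversary. (ii) If $\mathcal{H}$ has an infinite Littlestone tree, then there is a strategy for the adversary that forces any learner to make a mistake in every round. In particular, $\mathcal{H}$ is online learnable if and only if it has no infinite Littlestone tree.
   Context: Online learning game: in each round $t\ge1$, the adversary chooses $x_t\in\mathcal{X}$, the learner predicts $\hat y_t\in\{0,1\}$, and the adversary reveals $y_t\in\{0,1\}$, subject to the constraint that for every $T$ there is $h\in\mathcal{H}$ with $h(x_t)=y_t$ for all $t\le T$ (the sequence is realizable). The learner makes a mistake in round $t$ if $\hat y_t\ne y_t$. A learner strategy is a rule $\hat y_t=\hat y_t(x_1,y_1,\ldots,x_{t-1},y_{t-1},x_t)$. $\mathcal{H}$ is online learnable if some learner strategy makes only finitely many mistakes on every realizable sequence $\{(x_t,y_t)\}_{t\ge1}$. Littlestone tree of depth $d\le\infty$: a collection $\{x_{\mathbf u}:0\le k<d,\ \mathbf u\in\{0,1\}^k\}\subseteq\mathcal{X}$ such that for every $\mathbf y\in\{0,1\}^d$ and every $n<d$ there is $h\in\mathcal{H}$ with $h(x_{\mathbf y_{\le k}})=y_{k+1}$ for $0\le k\le n$, where $\mathbf y_{\le k}=(y_1,\ldots,y_k)$. Infinite Littlestone tree: depth $d=\infty$. *)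

(* Defs.v *)
From Stdlib Require Import List Arith.
Import ListNotations.

(* A history is the chronological list of revealed pairs (x_1,y_1),...,(x_{t-1},y_{t-1}). *)
Definition history (X : Type) := list (X * bool).

Definition learner (X : Type) := history X -> X -> bool.

(* Rounds are indexed from 0: round t uses xs t, ys t. *)
Definition prefix {X : Type} (xs : nat -> X) (ys : nat -> bool) (t : nat) : history X :=
  map (fun i => (xs i, ys i)) (seq 0 t).

Definition realizable {X : Type} (H : (X -> bool) -> Prop)
  (xs : nat -> X) (ys : nat -> bool) : Prop :=
  forall T : nat, exists h, H h /\ forall t, t < T -> h (xs t) = ys t.

Definition mistake {X : Type} (L : learner X) (xs : nat -> X) (ys : nat -> bool) (t : nat) : Prop :=
  L (prefix xs ys t) (xs t) <> ys t.

Definition finitely_many_mistakes {X : Type} (L : learner X)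
  (xs : nat -> X) (ys : nat -> bool) : Prop :=
  exists N, forall t, N <= t -> ~ mistake L xs ys t.

Definition online_learnable {X : Type} (H : (X -> bool) -> Prop) : Prop :=
  exists L : learner X, forall xs ys, realizable H xs ys -> finitely_many_mistakes L xs ys.

(* Infinite Littlestone tree: nodes x_u indexed by finite bit strings u;
   for every infinite path y and every n there is h in H with
   h (x_{y_{<=k}}) = y_{k+1} for all 0 <= k <= n.  With 0-indexed y,
   y_{<=k} = [y 0; ...; y (k-1)] and y_{k+1} = y k. *)
Definition bits_prefix (y : nat -> bool) (k : nat) : list bool := map y (seq 0 k).

Definition is_inf_littlestone_tree {X : Type} (H : (X -> bool) -> Prop)
  (tree : list bool -> X) : Prop :=
  forall (y : nat -> bool) (n : nat),
    exists h, H h /\ forall k, k <= n -> h (tree (bits_prefix y k)) = y k.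

Definition has_inf_littlestone_tree {X : Type} (H : (X -> bool) -> Prop) : Prop :=
  exists tree : list bool -> X, is_inf_littlestone_tree H tree.

(* An adversary strategy: chooses x_t from the history, and y_t after seeing
   x_t and the learner's prediction yhat_t. *)
Record adversary (X : Type) := Adversary {
  adv_x : history X -> X;
  adv_y : history X -> X -> bool -> bool
}.
Arguments adv_x {X}.
Arguments adv_y {X}.

Fixpoint play_hist {X : Type} (L : learner X) (A : adversary X) (t : nat) : history X :=
  match t with
  | O => []
  | S t' =>
      let h := play_hist L A t' in
      let x := adv_x A h in
      h ++ [(x, adv_y A h x (L h x))]
  end.

Definition play_x {X : Type} (L : learner X) (A : adversary X) (t : nat) : X :=
  adv_x A (play_hist L A t).

Definition play_y {X : Type} (L : learner X) (A : adversary X) (t : nat) : bool :=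
  let h := play_hist L A t in adv_y A h (adv_x A h) (L h (adv_x A h)).

(* Main.v *)
Require Import Defs.
From Stdlib Require Import List Arith.
From Stdlib Require Import Classical ClassicalEpsilon Lia.
Import ListNotations.

Definition restrict {X : Type} (V : (X -> bool) -> Prop) (x : X) (b : bool) :=
  fun h => V h /\ h x = b.

Inductive LWT {X : Type} : ((X -> bool) -> Prop) -> Type :=
| lw_empty : forall V, (forall h, ~ V h) -> LWT V
| lw_step : forall V (c : X -> bool), (forall x, LWT (restrict V x (c x))) -> LWT V.

Definition state (X : Type) := {V : (X -> bool) -> Prop & LWT V}.

Definition step {X : Type} (s : state X) (p : X * bool) : state X :=
  match s with existT _ V w =>
    match w with
    | lw_empty V0 e => existT _ V0 (lw_empty V0 e)
    | lw_step V0 c f =>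
        if Bool.eqb (snd p) (c (fst p)) then existT _ _ (f (fst p))
        else existT _ V0 (lw_step V0 c f)
    end end.

Definition predict {X : Type} (s : state X) (x : X) : bool :=
  match projT2 s with
  | lw_empty _ _ => false
  | lw_step _ c _ => negb (c x)
  end.

Definition lrn {X : Type} (s0 : state X) : learner X :=
  fun hist x => predict (fold_left step hist s0) x.

Definition Sst {X : Type} (s0 : state X) xs ys t := fold_left step (prefix xs ys t) s0.

Lemma Sst_succ {X : Type} (s0 : state X) xs ys t :
  Sst s0 xs ys (S t) = step (Sst s0 xs ys t) (xs t, ys t).
Proof.
  unfold Sst, prefix. rewrite seq_S, map_app, fold_left_app. reflexivity.
Qed.

Lemma Sst_inv {X : Type} (H : (X -> bool) -> Prop) (w0 : LWT H) xs ys :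
  forall t h, H h -> (forall i, i < t -> h (xs i) = ys i) ->
  projT1 (Sst (existT _ H w0) xs ys t) h.
Proof.
  induction t as [|t IH]; intros h Hh Hc.
  - exact Hh.
  - rewrite Sst_succ.
    assert (IH' := IH h Hh (fun i Hi => Hc i (Nat.lt_lt_succ_r _ _ Hi))).
    destruct (Sst (existT _ H w0) xs ys t) as [V w]. simpl in IH'.
    destruct w as [V e | V c f]; simpl; [exact IH'|].
    destruct (Bool.eqb (ys t) (c (xs t))) eqn:E; simpl; [|exact IH'].
    split; [exact IH'|]. apply Bool.eqb_prop in E. rewrite Hc by lia. exact E.
Qed.

Lemma learner_ok {X : Type} (H : (X -> bool) -> Prop) (w0 : LWT H) xs ys :
  realizable H xs ys ->
  forall V (w : LWT V) s, Sst (existT _ H w0) xs ys s = existT _ V w ->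
  exists N, forall t, N <= t -> ~ mistake (lrn (existT _ H w0)) xs ys t.
Proof.
  intros Hr V w. induction w as [V e | V c f IH]; intros s Es.
  - exfalso. destruct (Hr s) as [h [Hh Hc]].
    assert (P := Sst_inv H w0 xs ys s h Hh Hc). rewrite Es in P. exact (e h P).
  - assert (C : forall t, Sst (existT _ H w0) xs ys t = existT _ V (lw_step V c f) ->
                 mistake (lrn (existT _ H w0)) xs ys t ->
                 exists N, forall t, N <= t -> ~ mistake (lrn (existT _ H w0)) xs ys t).
    { intros t Et M. unfold mistake, lrn in M. fold (Sst (existT _ H w0) xs ys t) in M.
      rewrite Et in M. unfold predict in M; simpl in M.
      apply (IH (xs t) (S t)). rewrite Sst_succ, Et. simpl.
      assert (ys t = c (xs t)) as ->.
      { destruct (ys t), (c (xs t)); simpl in M; try reflexivity; exfalso; apply M; reflexivity. }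
      rewrite Bool.eqb_reflx. reflexivity. }
    assert (aux : forall d, Sst (existT _ H w0) xs ys (s + d) = existT _ V (lw_step V c f)
               \/ exists N, forall t, N <= t -> ~ mistake (lrn (existT _ H w0)) xs ys t).
    { induction d as [|d IHd].
      - left. rewrite Nat.add_0_r. exact Es.
      - destruct IHd as [E|E]; [|right; exact E].
        destruct (classic (mistake (lrn (existT _ H w0)) xs ys (s + d))) as [M|M].
        + right. exact (C _ E M).
        + left. rewrite Nat.add_succ_r, Sst_succ, E. simpl.
          unfold mistake, lrn in M. fold (Sst (existT _ H w0) xs ys (s + d)) in M.
          rewrite E in M. unfold predict in M; simpl in M.
          assert (Bool.eqb (ys (s + d)) (c (xs (s + d))) = false) as ->.
          { destruct (ys (s + d)), (c (xs (s + d))); simpl in *; try reflexivity; exfalso; apply M; discriminate. }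
          reflexivity. }
    destruct (classic (exists t, s <= t /\ mistake (lrn (existT _ H w0)) xs ys t))
      as [[t [Ht M]]|Hn].
    + destruct (aux (t - s)) as [E|E]; [|exact E].
      replace (s + (t - s)) with t in E by lia. exact (C t E M).
    + exists s. intros t Ht M. apply Hn. exists t. auto.
Qed.

Lemma NW_step {X : Type} (V : (X -> bool) -> Prop) :
  ~ inhabited (LWT V) -> exists x, forall b, ~ inhabited (LWT (restrict V x b)).
Proof.
  intro NI. apply NNPP. intro Hn. apply NI.
  assert (E : forall x, exists p : {b : bool & LWT (restrict V x b)}, True).
  { intro x. apply NNPP. intro Hx. apply Hn. exists x. intros b [wb]. apply Hx.
    exists (existT _ b wb). exact I. }
  set (g := fun x => proj1_sig (constructive_indefinite_description _ (E x))).
  constructor. exact (lw_step V (fun x => projT1 (g x)) (fun x => projT2 (g x))).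
Qed.

Lemma NW_nonempty {X : Type} (V : (X -> bool) -> Prop) :
  ~ inhabited (LWT V) -> exists h, V h.
Proof.
  intro NI. apply NNPP. intro Hn. apply NI. constructor. apply lw_empty.
  intros h Hh. apply Hn. exists h. exact Hh.
Qed.

Fixpoint Fc {X : Type} (pick : ((X -> bool) -> Prop) -> X) (u : list bool)
  (V : (X -> bool) -> Prop) : (X -> bool) -> Prop :=
  match u with
  | [] => V
  | b :: u' => Fc pick u' (restrict V (pick V) b)
  end.

Lemma Fc_mem {X : Type} pick : forall (u : list bool) (V : (X -> bool) -> Prop) h,
  Fc pick u V h -> V h /\ forall k, k < length u -> h (pick (Fc pick (firstn k u) V)) = nth k u false.
Proof.
  induction u as [|b u IH]; intros V h Hm; simpl in *.
  - split; [exact Hm|]. intros; lia.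
  - destruct (IH _ _ Hm) as [[HV Hb] Hk]. split; [exact HV|].
    intros [|k] Hkl; simpl; [exact Hb|]. apply Hk. lia.
Qed.

Lemma firstn_map_seq (y : nat -> bool) : forall k m s, k <= m ->
  firstn k (map y (seq s m)) = map y (seq s k).
Proof.
  induction k; intros m s Hk; [reflexivity|].
  destruct m; [lia|]. simpl. f_equal. apply IHk. lia.
Qed.

Lemma nth_map_seq (y : nat -> bool) : forall k m s, k < m ->
  nth k (map y (seq s m)) false = y (s + k).
Proof.
  induction k; intros m s Hk; destruct m; try lia; simpl.
  - f_equal; lia.
  - rewrite IHk by lia. f_equal; lia.
Qed.

Lemma no_tree_LWT {X : Type} (H : (X -> bool) -> Prop) :
  ~ has_inf_littlestone_tree H -> inhabited (LWT H).
Proof.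
  intro NT. apply NNPP. intro NI. apply NT.
  destruct (NW_step H NI) as [x0 _].
  set (pick := fun V : (X -> bool) -> Prop =>
         epsilon (inhabits x0) (fun x => forall b, ~ inhabited (LWT (restrict V x b)))).
  assert (Fn : forall u V, ~ inhabited (LWT V) -> ~ inhabited (LWT (Fc pick u V))).
  { induction u as [|b u IH]; intros V HV; simpl; [exact HV|].
    apply IH. unfold pick.
    exact (epsilon_spec (inhabits x0) (fun x => forall b, ~ inhabited (LWT (restrict V x b)))
      (NW_step V HV) b). }
  exists (fun u => pick (Fc pick u H)). intros y n.
  destruct (NW_nonempty _ (Fn (bits_prefix y (S n)) H NI)) as [h Hh].
  destruct (Fc_mem pick _ _ _ Hh) as [HH Hk].
  exists h. split; [exact HH|]. intros k Hkn.
  assert (Hl : k < length (bits_prefix y (S n))).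
  { unfold bits_prefix. rewrite length_map, length_seq. lia. }
  specialize (Hk k Hl). unfold bits_prefix in *.
  rewrite firstn_map_seq in Hk by lia. rewrite nth_map_seq in Hk by lia. exact Hk.
Qed.

Definition tree_adv {X : Type} (tree : list bool -> X) : adversary X :=
  Adversary X (fun h => tree (map snd h)) (fun _ _ yh => negb yh).

Lemma play_hist_prefix {X : Type} (L : learner X) (A : adversary X) :
  forall t, play_hist L A t = prefix (play_x L A) (play_y L A) t.
Proof.
  induction t as [|t IH]; [reflexivity|].
  unfold prefix in *. rewrite seq_S, map_app. simpl. rewrite <- IH. reflexivity.
Qed.

Lemma part2 {X : Type} (H : (X -> bool) -> Prop) :
  has_inf_littlestone_tree H ->
  exists A : adversary X, forall L : learner X,
    realizable H (play_x L A) (play_y L A) /\ forall t, mistake L (play_x L A) (play_y L A) t.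
Proof.
  intros [tree Ht]. exists (tree_adv tree). intro L. split.
  - intro T. destruct (Ht (play_y L (tree_adv tree)) T) as [h [Hh Hk]].
    exists h. split; [exact Hh|]. intros t Hlt.
    rewrite <- Hk by lia. f_equal. unfold play_x. simpl.
    rewrite play_hist_prefix. unfold prefix, bits_prefix. rewrite map_map. reflexivity.
  - intro t. unfold mistake. rewrite <- play_hist_prefix.
    unfold play_y, play_x. simpl. destruct (L _ _); discriminate.
Qed.

Theorem mainTheorem3 :
  forall (X : Type) (H : (X -> bool) -> Prop),
    (* (i) *)
    (~ has_inf_littlestone_tree H ->
       exists L : learner X,
         forall xs ys, realizable H xs ys -> finitely_many_mistakes L xs ys)
    (* (ii) *)
    /\ (has_inf_littlestone_tree H ->
          exists A : adversary X,
            forall L : learner X,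
              realizable H (play_x L A) (play_y L A)
              /\ forall t, mistake L (play_x L A) (play_y L A) t)
    (* in particular *)
    /\ (online_learnable H <-> ~ has_inf_littlestone_tree H).
Proof.
  intros X H.
  assert (P1 : ~ has_inf_littlestone_tree H ->
       exists L : learner X,
         forall xs ys, realizable H xs ys -> finitely_many_mistakes L xs ys).
  { intro NT. destruct (no_tree_LWT H NT) as [w0].
    exists (lrn (existT _ H w0)). intros xs ys Hr.
    exact (learner_ok H w0 xs ys Hr H w0 0 eq_refl). }
  split; [exact P1|]. split; [exact (part2 H)|].
  split.
  - intros [L HL] Ht. destruct (part2 H Ht) as [A HA].
    destruct (HA L) as [Hr Hm]. destruct (HL _ _ Hr) as [N HN].
    exact (HN N (le_n N) (Hm N)).
  - intro NT. exact (P1 NT).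
Qed.
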